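(* Let $\Sigma$ be a finite alphabet and let $s_1,s_2\in\Sigma^n$ be two related strings of length $n$ (each symbol occurs equally often in both). Let $B=\{b_i : i\in I\}$ be the set of all blocks of length at least two, listed in an arbitrary fixed order $i_0,i_1,\dots,i_{m-1}$ ($m=|I|$), and let $D$ be the decision diagram constructed from the dynamic program described in the context (one node per reachable state on each stage, arcs and weights given by the transition and cost functions, root weight $n$, terminal $\mathbf T$). Then $D$ is an exact decision diagram for the MCSP, i.e. the set of assignments $x\in\{0,1\}^{I\cup\{\lambda\}}$ encoded by the $r$–$\mathbf T$ paths of $D$ equals the set of feasible assignments of the MCSP formulation (those with $x_\lambda=1$ and with $\neg(x_i\wedge x_j)$ for every pair of overlapping blocks $b_i,b_j$), the weight of the path encoding a feasible $x$ equals $n+\sum_{i\in I:\,x_i=1}(1-t_i)$, which is the number of substrings in the common partition of $s_1$ and $s_2$ consisting of the chosen blocks together with single symbols for all uncovered positions, and consequently $\mathrm{Opt}(D)=\mathrm{Opt}(\mathrm{MCSP})$: the minimum-weight $r$–$\mathbf T$ paths encode exactly the optimal feasible assignments, and the minimum path weight equals the minimum size of a common partition of $s_1$ and $s_2$.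
   Context: For a string $s$ of length $n$ and $0\le i<j\le n$, $s[i:j]$ denotes the substring consisting of the symbols at positions $i,\dots,j-1$ (positions indexed from $0$). $1^n$ ($0^n$) denotes the string of $n$ ones (zeros). Minimum Common String Partition (MCSP): for related strings $s_1,s_2$, a solution is a partition of $s_1$ and of $s_2$ into multisets $P_1,P_2$ of non-overlapping consecutive substrings with $P_1=P_2$; its value is $|P_1|=|P_2|$, to be minimized. A block is a triple $b=(k^1,k^2,t)$ with $t\in\{1,\dots,n\}$, $k^1,k^2\in\{0,\dots,n-t\}$ and $s_1[k^1:k^1+t]=s_2[k^2:k^2+t]$. Blocks $b_i=(k_i^1,k_i^2,t_i)$ and $b_j=(k_j^1,k_j^2,t_j)$ overlap if $k_i^1-t_j<k_j^1<k_i^1+t_i$ or $k_i^2-t_j<k_j^2<k_i^2+t_i$. $B$ is the set of blocks with $t\ge2$, indexed by $I$; $\lambda\notin I$ is an extra index. The MCSP formulation has Boolean variables $x_i$, $i\in I\cup\{\lambda\}$, constraints $\neg(x_i\wedge x_j)$ for overlapping $b_i,b_j$, and objective $n+\sum_{i\in I: x_i=1}(1-t_i)$. Dynamic program: states are pairs $(bs^1,bs^2)$ of bitstrings in $\{0,1\}^n$. Stage $0$ contains only the root state $(1^n,1^n)$; the variables are processed in the order $x_{i_0},\dots,x_{i_{m-1}},x_\lambda$, and the final stage contains only the terminal state $(0^n,0^n)$. Transitions from state $(bs^1,bs^2)$ on variable $x_i$: for $i\in I$, $x_i=0$ leads to $(bs^1,bs^2)$ with cost $0$; $x_i=1$ is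 defined only if $bs^c[j]=1$ for all $k_i^c\le j<k_i^c+t_i$ for both $c=1,2$, and then leads to the state obtained by setting these positions to $0$ in $bs^1$ and $bs^2$ respectively, with cost $1-t_i$; for $\lambda$, $x_\lambda=1$ leads to $(0^n,0^n)$ with cost $0$ and $x_\lambda=0$ is undefined. The root value is $n$. Decision diagram $D$: a layered directed acyclic multigraph with layers $L_0,\dots,L_{m+1}$; $L_0=\{r\}$ is the root (root state, weight $n$), layer $L_\ell$ for $\ell\le m$ contains one node per state reachable on stage $\ell$ and is associated with the $\ell$-th variable, and $L_{m+1}=\{\mathbf T\}$. Each defined transition gives an arc labeled by the value of the variable ($0$-arc or $1$-arc) with weight equal to the transition cost. An $r$–$\mathbf T$ path encodes the assignment given by its arc labels; its weight is $n$ plus the sum of its arc weights. $\mathrm{Opt}(D)$ is the set of assignments encoded by minimum-weight $r$–$\mathbf T$ paths, and $\mathrm{Opt}(\mathrm{MCSP})$ the set of feasible assignments of minimum objective value. *)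

(* Defs.v *)
From HB Require Import structures.
From mathcomp Require Import all_boot all_order all_algebra.
Set Implicit Arguments. Unset Strict Implicit. Unset Printing Implicit Defensive.
Import Order.TTheory GRing.Theory Num.Theory.

Definition substr (S : eqType) (s : seq S) (i j : nat) : seq S :=
  take (j - i) (drop i s).

Definition block := (nat * nat * nat)%type.
Definition bk1 (b : block) : nat := b.1.1.
Definition bk2 (b : block) : nat := b.1.2.
Definition blen (b : block) : nat := b.2.
Definition block0 : block := (0, 0, 0).

Definition is_block (S : eqType) (n : nat) (s1 s2 : seq S) (b : block) : bool :=
  [&& 1 <= blen b, blen b <= n, bk1 b <= n - blen b, bk2 b <= n - blen b &
      substr s1 (bk1 b) (bk1 b + blen b) == substr s2 (bk2 b) (bk2 b + blen b)].

Definition is_long_block (S : eqType) (n : nat) (s1 s2 : seq S) (b : block) : bool :=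
  is_block n s1 s2 b && (2 <= blen b).

(* b_i and b_j overlap:
   k_i^1 - t_j < k_j^1 < k_i^1 + t_i  or  k_i^2 - t_j < k_j^2 < k_i^2 + t_i
   (the first inequality written as k_i^c < k_j^c + t_j to stay in nat) *)
Definition overlap (bi bj : block) : bool :=
  ((bk1 bi < bk1 bj + blen bj) && (bk1 bj < bk1 bi + blen bi)) ||
  ((bk2 bi < bk2 bj + blen bj) && (bk2 bj < bk2 bi + blen bi)).

(* The MCSP formulation.  B is the list [b_{i_0}; ...; b_{i_{m-1}}]    *)
(* (m = size B); an assignment is x : seq bool of size m+1, where      *)
(* x_{i_l} = nth false x l for l < m and x_lambda = nth false x m.     *)

Definition feasible (B : seq block) (x : seq bool) : Prop :=
  [/\ size x = (size B).+1,
      nth false x (size B) = true &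
      forall i j, i < size B -> j < size B -> i != j ->
        overlap (nth block0 B i) (nth block0 B j) ->
        ~~ (nth false x i && nth false x j)].

Definition objective (B : seq block) (n : nat) (x : seq bool) : int :=
  (Posz n + \sum_(i < size B | nth false x i) (1 - Posz (blen (nth block0 B i))))%R.

Definition optimal (B : seq block) (n : nat) (x : seq bool) : Prop :=
  feasible B x /\ forall y, feasible B y -> (objective B n x <= objective B n y)%R.

Definition state := (seq bool * seq bool)%type.
Definition root_state (n : nat) : state := (nseq n true, nseq n true).
Definition terminal_state (n : nat) : state := (nseq n false, nseq n false).

Definition fits (bs : seq bool) (k t : nat) : bool :=
  all (fun j => nth false bs j) (iota k t).

Definition clear_range (bs : seq bool) (k t : nat) : seq bool :=
  [seq (if (k <= j) && (j < k + t) then false else nth false bs j)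
  | j <- iota 0 (size bs)].

(* transition on stage l (variable x_{i_l} if l < m, x_lambda if l = m)
   from state u with value v: None if undefined, else Some (target, cost) *)
Definition trans (B : seq block) (n l : nat) (u : state) (v : bool)
  : option (state * int) :=
  if l < size B then
    let b := nth block0 B l in
    if v then
      if fits u.1 (bk1 b) (blen b) && fits u.2 (bk2 b) (blen b) then
        Some ((clear_range u.1 (bk1 b) (blen b), clear_range u.2 (bk2 b) (blen b)),
              (1 - Posz (blen b))%R)
      else None
    else Some (u, 0%R)
  else if l == size B then
    (if v then Some (terminal_state n, 0%R) else None)
  else None.

Fixpoint run (B : seq block) (n l : nat) (u : state) (xs : seq bool) : option state :=
  match xs with
  | [::] => Some u
  | v :: xs' =>
      match trans B n l u v with
      | Some (u', _) => run B n l.+1 u' xs'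
      | None => None
      end
  end.

Definition in_layer (B : seq block) (n l : nat) (u : state) : Prop :=
  exists xs : seq bool, size xs = l /\ run B n 0 (root_state n) xs = Some u.

(* an r-T path of D: node sequence us = (u_0 = r, ..., u_{m+1} = T) and arc
   labels xs = (x_0, ..., x_m); the arc with label x_l goes from node u_l of
   layer L_l to u_{l+1} along a defined transition. *)
Definition rT_path (B : seq block) (n : nat) (us : seq state) (xs : seq bool) : Prop :=
  [/\ size xs = (size B).+1,
      size us = (size B).+2,
      nth (root_state n) us 0 = root_state n,
      nth (root_state n) us (size B).+1 = terminal_state n &
      forall l, l <= size B ->
        in_layer B n l (nth (root_state n) us l) /\
        exists w, trans B n l (nth (root_state n) us l) (nth false xs l)
                  = Some (nth (root_state n) us l.+1, w)].

Definition arc_weight (B : seq block) (n l : nat) (u : state) (v : bool) : int :=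
  match trans B n l u v with Some (_, w) => w | None => 0%R end.

Definition path_weight (B : seq block) (n : nat) (us : seq state) (xs : seq bool) : int :=
  (Posz n + \sum_(l < (size B).+1)
              arc_weight B n l (nth (root_state n) us l) (nth false xs l))%R.

Definition min_path (B : seq block) (n : nat) (us : seq state) (xs : seq bool) : Prop :=
  rT_path B n us xs /\
  forall us' xs', rT_path B n us' xs' ->
    (path_weight B n us xs <= path_weight B n us' xs')%R.

(* a partition of s into consecutive substrings is given by the list c of
   the (positive) lengths of its pieces, from left to right *)
Definition is_partition (S : eqType) (s : seq S) (c : seq nat) : bool :=
  all (fun t => 0 < t) c && (sumn c == size s).

Fixpoint pieces (S : eqType) (s : seq S) (c : seq nat) : seq (seq S) :=
  match c with
  | [::] => [::]
  | t :: c' => take t s :: pieces (drop t s) c'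
  end.

Fixpoint intervals_from (start : nat) (c : seq nat) : seq (nat * nat) :=
  match c with
  | [::] => [::]
  | t :: c' => (start, t) :: intervals_from (start + t) c'
  end.
Definition intervals (c : seq nat) := intervals_from 0 c.

(* (c1, c2) is a common partition: the multisets of pieces coincide;
   its size is size c1 (= size c2) *)
Definition common_partition (S : eqType) (s1 s2 : seq S) (c1 c2 : seq nat) : bool :=
  [&& is_partition s1 c1, is_partition s2 c2 & perm_eq (pieces s1 c1) (pieces s2 c2)].

Definition chosen (B : seq block) (x : seq bool) : seq block :=
  [seq nth block0 B i | i <- iota 0 (size B) & nth false x i].

Definition uncovered1 (B : seq block) (n : nat) (x : seq bool) : seq nat :=
  [seq j <- iota 0 n | ~~ has (fun b => (bk1 b <= j) && (j < bk1 b + blen b)) (chosen B x)].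
Definition uncovered2 (B : seq block) (n : nat) (x : seq bool) : seq nat :=
  [seq j <- iota 0 n | ~~ has (fun b => (bk2 b <= j) && (j < bk2 b + blen b)) (chosen B x)].

(* Main.v *)
Require Import Defs.
From HB Require Import structures.
From mathcomp Require Import all_boot all_order all_algebra.
From mathcomp Require Import zify.
From Stdlib Require Import Classical.
Import Order.TTheory GRing.Theory Num.Theory.
Set Implicit Arguments. Unset Strict Implicit. Unset Printing Implicit Defensive.

Lemma uniq_map_inj (T1 T2 : eqType) (f : T1 -> T2) (s : seq T1) :
  uniq (map f s) -> {in s &, injective f}.
Proof.
elim: s => //= a s IH /andP[Hn Hu] x y; rewrite !inE.
case/predU1P=> [->|Hx]; case/predU1P=> [->|Hy] // E.
- by move: Hn; rewrite E map_f.
- by move: Hn; rewrite -E map_f.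
- exact: IH.
Qed.

Lemma intervals_from_snd p c : map snd (intervals_from p c) = c.
Proof. by elim: c p => //= t c IH p; rewrite IH. Qed.

Lemma size_intervals_from p c : size (intervals_from p c) = size c.
Proof. by rewrite -(size_map snd) intervals_from_snd. Qed.

Lemma intervals_from_props p c : all (fun t => 0 < t) c ->
  forall a, a \in intervals_from p c -> [/\ p <= a.1, 0 < a.2 & a.1 + a.2 <= p + sumn c].
Proof.
elim: c p => //= t c IH p /andP[Ht Hc] a; rewrite inE => /predU1P[->|Ha] /=.
  by split => //; lia.
have [H1 H2 H3] := IH _ Hc _ Ha; split => //; lia.
Qed.

Lemma intervals_from_disj p c : all (fun t => 0 < t) c ->
  forall a b, a \in intervals_from p c -> b \in intervals_from p c -> a != b ->
  (a.1 + a.2 <= b.1) || (b.1 + b.2 <= a.1).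
Proof.
elim: c p => //= t c IH p /andP[Ht Hc] a b; rewrite !inE.
case/predU1P=> [->|Ha]; case/predU1P=> [->|Hb] //=.
- by rewrite eqxx.
- by move=> _; have [H1 _ _] := intervals_from_props Hc Hb; rewrite H1.
- by move=> _; have [H1 _ _] := intervals_from_props Hc Ha; rewrite H1 orbT.
- exact: (IH (p + t) Hc a b Ha Hb).
Qed.

Lemma intervals_from_uniq p c : all (fun t => 0 < t) c -> uniq (intervals_from p c).
Proof.
elim: c p => //= t c IH p /andP[Ht Hc]; rewrite IH // andbT.
apply/negP => Hin; have [H1 _ _] := intervals_from_props Hc Hin; move: H1 => /=; lia.
Qed.

Lemma pieces_drop (S : eqType) (s : seq S) p c :
  pieces (drop p s) c = map (fun a => take a.2 (drop a.1 s)) (intervals_from p c).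
Proof.
elim: c p => //= t c IH p; congr (_ :: _).
by rewrite drop_drop addnC IH.
Qed.

Lemma pieces_intervals (S : eqType) (s : seq S) c :
  pieces s c = map (fun a => take a.2 (drop a.1 s)) (intervals c).
Proof. by rewrite -pieces_drop drop0. Qed.

Lemma flatten_pieces (S : eqType) (s : seq S) c : flatten (pieces s c) = take (sumn c) s.
Proof.
elim: c s => /= [s|t c IH s]; first by rewrite take0.
by rewrite IH -takeD.
Qed.

Lemma matching (T1 T2 U : eqType) (g1 : T1 -> U) (g2 : T2 -> U) P1 P2 :
  perm_eq (map g1 P1) (map g2 P2) ->
  exists M : seq (T1 * T2), [/\ map fst M = P1, perm_eq (map snd M) P2 &
                                all (fun q => g1 q.1 == g2 q.2) M].
Proof.
elim: P1 P2 => [|a P1 IH] P2 /= Hp.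
  exists [::]; split => //; case: P2 Hp => //= b P2 /perm_size //.
have : g1 a \in map g2 P2 by rewrite -(perm_mem Hp) mem_head.
case/mapP => b Hb Eab.
have Hp2 : perm_eq (map g2 P2) (g2 b :: map g2 (rem b P2)).
  by rewrite -map_cons; apply: perm_map; apply: perm_to_rem.
have := perm_trans Hp Hp2; rewrite -Eab perm_cons => /IH [M [H1 H2 H3]].
exists ((a, b) :: M); split => /=.
- by rewrite H1.
- have Hr : perm_eq (b :: rem b P2) P2 by rewrite perm_sym perm_to_rem.
  by apply: (perm_trans _ Hr); rewrite perm_cons.
- by rewrite Eab eqxx.
Qed.

Definition inr (k t j : nat) := (k <= j) && (j < k + t).
Definition covL (L : seq (nat * nat)) j := has (fun a => inr a.1 a.2 j) L.
Definition uncL n L := [seq j <- iota 0 n | ~~ covL L j].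
Definition stepL (L : seq (nat * nat)) p := head 1 [seq a.2 | a <- L & a.1 == p].
Fixpoint walk n L f p : seq nat :=
  match f with
  | 0 => [::]
  | f'.+1 => if p < n then stepL L p :: walk n L f' (p + stepL L p) else [::]
  end.

Definition goodL n (L : seq (nat * nat)) :=
  [/\ (forall a, a \in L -> 0 < a.2 /\ a.1 + a.2 <= n),
      (forall a b, a \in L -> b \in L -> a != b -> (a.1 + a.2 <= b.1) || (b.1 + b.2 <= a.1))
    & uniq L].

Ltac plia := repeat match goal with x : (_ * _)%type |- _ => destruct x end; simpl in *; lia.

Lemma stepL_eq n L p a0 : goodL n L -> a0 \in L -> a0.1 = p -> stepL L p = a0.2.
Proof.
move=> [Hb Hd Hu] Ha0 Ep; rewrite /stepL.
case E: [seq a <- L | a.1 == p] => [|b F] /=.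
  have: a0 \in [seq a <- L | a.1 == p] by rewrite mem_filter Ep eqxx Ha0.
  by rewrite E.
have: b \in [seq a <- L | a.1 == p] by rewrite E mem_head.
rewrite mem_filter => /andP[/eqP Eb Hb'].
case: (eqVneq b a0) => [->//|Hne].
have := Hd _ _ Hb' Ha0 Hne; have := Hb _ Hb'; have := Hb _ Ha0.
move=> [H1 H2] [H3 H4] /orP[]; plia.
Qed.

Lemma stepL_none L p : ~~ has (fun a => a.1 == p) L -> stepL L p = 1.
Proof. by rewrite has_filter negbK => /eqP E; rewrite /stepL E. Qed.

Lemma uncL_uniq n L : uniq (uncL n L).
Proof. by rewrite filter_uniq // iota_uniq. Qed.

Lemma walk_end n L : goodL n L ->
  [seq a <- L | n <= a.1] = [::] /\ [seq j <- uncL n L | n <= j] = [::].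
Proof.
move=> [Hb _ _]; split.
  rewrite (eq_in_filter (a2 := pred0)) ?filter_pred0 // => a Ha /=.
  have := Hb _ Ha; case=> H1 H2; apply/negbTE; rewrite -ltnNge; plia.
rewrite (eq_in_filter (a2 := pred0)) ?filter_pred0 // => j.
rewrite mem_filter mem_iota => /andP[_ Hj] /=; apply/negbTE; rewrite -ltnNge; plia.
Qed.

Lemma walk_spec n L f p : goodL n L -> p <= n -> n - p <= f ->
  (forall a, a \in L -> a.1 < p -> a.1 + a.2 <= p) ->
  [/\ all (fun t => 0 < t) (walk n L f p), sumn (walk n L f p) + p = n &
      perm_eq (intervals_from p (walk n L f p))
              ([seq a <- L | p <= a.1] ++ [seq (j, 1) | j <- [seq j <- uncL n L | p <= j]])].
Proof.
move=> HG; case: (HG) => Hb Hd Hu.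
have Hend : forall p, p = n -> forall W, W = [::] ->
  [/\ all (fun t => 0 < t) W, sumn W + p = n &
      perm_eq (intervals_from p W)
              ([seq a <- L | p <= a.1] ++ [seq (j, 1) | j <- [seq j <- uncL n L | p <= j]])].
  move=> q -> W ->; have [-> ->] := walk_end HG; by split.
elim: f p => [|f IH] p Hp Hf Hinv.
  by apply: Hend => //; plia.
rewrite /=; case: ltnP => Hpn; last by apply: Hend => //; plia.
case: (boolP (has (fun a => a.1 == p) L)) => [/hasP[a0 Ha0 /eqP E0]|Hno].
- rewrite (stepL_eq HG Ha0 E0).
  have [Ht Htn] := Hb _ Ha0.
  have Hinv' : forall a, a \in L -> a.1 < p + a0.2 -> a.1 + a.2 <= p + a0.2.
    move=> a Ha Hlt; case: (eqVneq a a0) => [->|Hne]; first plia.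
    have := Hd _ _ Ha Ha0 Hne; case/orP; plia.
  have [IH1 IH2 IH3] := IH (p + a0.2) ltac:(plia) ltac:(plia) Hinv'.
  split; first by rewrite /= Ht IH1.
    rewrite /=; plia.
  have EU : [seq j <- uncL n L | p <= j] = [seq j <- uncL n L | p + a0.2 <= j].
    apply: eq_in_filter => j; rewrite mem_filter => /andP[Hc _].
    apply/idP/idP => Hj; last plia.
    rewrite leqNgt; apply/negP => Hjt; move: Hc; rewrite /covL => /hasPn/(_ _ Ha0).
    by rewrite /inr E0 Hj Hjt.
  have EL : perm_eq [seq a <- L | p <= a.1] (a0 :: [seq a <- L | p + a0.2 <= a.1]).
    apply: uniq_perm; first by rewrite filter_uniq.
      rewrite /= filter_uniq // andbT mem_filter E0 negb_and; apply/orP; left; plia.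
    move=> a; rewrite inE !mem_filter; case: (eqVneq a a0) => [->|Hne] /=.
      by rewrite E0 leqnn Ha0.
    case Ha: (a \in L); last by rewrite !andbF.
    have := Hd _ _ Ha Ha0 Hne; have := Hb _ Ha; case=> H1 H2.
    rewrite !andbT; case/orP => H; apply/idP/idP; plia.
  have Ea0 : (p, a0.2) = a0 by rewrite -E0; case: (a0).
  rewrite EU /= Ea0.
  apply: (perm_trans (y := a0 :: ([seq a <- L | p + a0.2 <= a.1] ++
                 [seq (j, 1) | j <- [seq j <- uncL n L | p + a0.2 <= j]]))).
    by rewrite perm_cons.
  by rewrite -cat_cons perm_cat2r perm_sym.
- rewrite (stepL_none Hno).
  have Hne : forall a, a \in L -> a.1 != p.
    by move=> a Ha; move/hasPn: Hno => /(_ _ Ha).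
  have Hpu : p \in uncL n L.
    rewrite mem_filter mem_iota /= Hpn andbT; apply/hasPn => a Ha.
    have := Hne _ Ha; have := Hinv _ Ha; rewrite /inr; move=> H1 /eqP H2.
    apply/negP => /andP[H3 H4]; have : a.1 < p by plia.
    move/H1; plia.
  have Hinv' : forall a, a \in L -> a.1 < p + 1 -> a.1 + a.2 <= p + 1.
    move=> a Ha Hlt; have := Hne _ Ha; move/eqP => H.
    have : a.1 < p by plia.
    move/(Hinv _ Ha); plia.
  have [IH1 IH2 IH3] := IH (p + 1) ltac:(plia) ltac:(plia) Hinv'.
  split; first by rewrite /= IH1.
    rewrite /=; plia.
  have EL : [seq a <- L | p <= a.1] = [seq a <- L | p + 1 <= a.1].
    apply: eq_in_filter => a Ha; have := Hne _ Ha; move/eqP => H.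
    apply/idP/idP; plia.
  have EU : perm_eq [seq j <- uncL n L | p <= j] (p :: [seq j <- uncL n L | p + 1 <= j]).
    apply: uniq_perm; first by rewrite filter_uniq // uncL_uniq.
      rewrite /= filter_uniq ?uncL_uniq // andbT mem_filter negb_and; apply/orP; left; plia.
    move=> j; rewrite inE !mem_filter; case: (eqVneq j p) => [->|Hjp] /=.
      by move: Hpu; rewrite leqnn mem_filter => ->.
    case: (~~ covL L j && (j \in iota 0 n)); last by rewrite !andbF.
    rewrite !andbT; apply/idP/idP; plia.
  rewrite EL /=.
  apply: (perm_trans (y := (p, 1) :: ([seq a <- L | p + 1 <= a.1] ++
                 [seq (j, 1) | j <- [seq j <- uncL n L | p + 1 <= j]]))).
    by rewrite perm_cons.
  rewrite -cat1s perm_catCA perm_cat2l perm_sym.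
  by have := perm_map (fun j => (j, 1)) EU.
Qed.

Lemma tiling n L : goodL n L -> exists c,
  [/\ all (fun t => 0 < t) c, sumn c = n &
      perm_eq (intervals c) (L ++ [seq (j, 1) | j <- uncL n L])].
Proof.
move=> HG; have [H1 H2 H3] := walk_spec (f := n) HG (leq0n n) (leq_subr 0 n)
   (fun a _ H => match (negP (negbT (ltn0 a.1))) H with end).
exists (walk n L n 0); split => //; first by rewrite addn0 in H2.
by move: H3; rewrite /intervals !(eq_filter (a2 := predT)) // !filter_predT.
Qed.

Definition covk (k : block -> nat) (B : seq block) (xs : seq bool) j :=
  has (fun i => nth false xs i && inr (k (nth block0 B i)) (blen (nth block0 B i)) j)
      (iota 0 (size xs)).
Definition stS (B : seq block) n xs : state :=
  ([seq ~~ covk bk1 B xs j | j <- iota 0 n], [seq ~~ covk bk2 B xs j | j <- iota 0 n]).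
Definition okP (B : seq block) (xs : seq bool) := forall i j, i < size xs -> j < size xs -> i != j ->
  nth false xs i -> nth false xs j -> ~~ overlap (nth block0 B i) (nth block0 B j).
Definition Bgood (B : seq block) n := forall b, b \in B ->
  0 < blen b /\ bk1 b + blen b <= n /\ bk2 b + blen b <= n.

Lemma overlap_sym a b : overlap a b = overlap b a.
Proof. by rewrite /overlap (andbC (bk1 a < _)) (andbC (bk2 a < _)). Qed.

Lemma covk_rcons k B xs v j : covk k B (rcons xs v) j =
  covk k B xs j || (v && inr (k (nth block0 B (size xs))) (blen (nth block0 B (size xs))) j).
Proof.
rewrite /covk size_rcons -addn1 iotaD has_cat /= orbF add0n; congr orb.
  by apply: eq_in_has => i; rewrite mem_iota /= => Hi; rewrite nth_rcons Hi.
by rewrite nth_rcons ltnn eqxx.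
Qed.

Lemma stS_nil B n : stS B n [::] = root_state n.
Proof.
rewrite /stS /covk /= /root_state.
have H : forall m, [seq true | _ <- iota m n] = nseq n true.
  by elim: n => //= n IH m; rewrite IH.
by rewrite H.
Qed.

Lemma inter_ex a s c t : 0 < s -> 0 < t ->
  (exists j, inr a s j && inr c t j) <-> (a < c + t) && (c < a + s).
Proof.
move=> Hs Ht; split.
  by case=> j /andP[/andP[H1 H2] /andP[H3 H4]]; apply/andP; split; lia.
move=> /andP[H1 H2]; exists (maxn a c); rewrite /inr; apply/andP; split; apply/andP; split; lia.
Qed.

Lemma fits_stS k B n xs :
  (forall i, i <= size xs -> 0 < blen (nth block0 B i)) ->
  k (nth block0 B (size xs)) + blen (nth block0 B (size xs)) <= n ->
  fits [seq ~~ covk k B xs j | j <- iota 0 n] (k (nth block0 B (size xs)))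
       (blen (nth block0 B (size xs))) <->
  (forall i, i < size xs -> nth false xs i ->
     ~~ ((k (nth block0 B i) < k (nth block0 B (size xs)) + blen (nth block0 B (size xs))) &&
         (k (nth block0 B (size xs)) < k (nth block0 B i) + blen (nth block0 B i)))).
Proof.
set b := nth block0 B (size xs) => Hpos Hbnd; rewrite /fits; split.
- move=> /allP Hall i Hi Hxi; apply/negP => Hint.
  have [j /andP[Hj1 Hj2]] : exists j, inr (k (nth block0 B i)) (blen (nth block0 B i)) j &&
       inr (k b) (blen b) j.
    by apply/inter_ex => //; [apply: Hpos; lia | apply: Hpos].
  have Hjn : j < n by move: Hj2 Hbnd; rewrite /inr; lia.
  have := Hall j; rewrite mem_iota; move: (Hj2); rewrite /inr => /andP[-> ->] /(_ isT).
  rewrite (nth_map 0) ?size_iota // nth_iota // add0n => /negP; apply.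
  by apply/hasP; exists i; rewrite ?mem_iota ?Hxi.
- move=> H; apply/allP => j; rewrite mem_iota => Hj.
  have Hjn : j < n by lia.
  rewrite (nth_map 0) ?size_iota // nth_iota // add0n; apply/hasPn => i.
  rewrite mem_iota add0n => /andP[_ Hi]; apply/negP => /andP[Hxi Hin].
  have := H i Hi Hxi; move/negP; apply; apply/inter_ex.
  + by apply: Hpos; lia.
  + by apply: Hpos.
  + by exists j; rewrite Hin /inr.
Qed.

Lemma clear_stS k B n xs :
  clear_range [seq ~~ covk k B xs j | j <- iota 0 n] (k (nth block0 B (size xs)))
       (blen (nth block0 B (size xs))) = [seq ~~ covk k B (rcons xs true) j | j <- iota 0 n].
Proof.
rewrite /clear_range size_map size_iota; apply/eq_in_map => j; rewrite mem_iota /= => Hj.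
rewrite covk_rcons (nth_map 0) ?size_iota // nth_iota // add0n /inr.
by case: ifP => _; rewrite ?orbT ?orbF.
Qed.

Lemma run_rcons B n l u xs v : run B n l u (rcons xs v) =
  match run B n l u xs with
  | Some u' => match trans B n (l + size xs) u' v with Some (u'', _) => Some u'' | None => None end
  | None => None end.
Proof.
elim: xs l u => [|v' xs IH] l u /=.
  by rewrite addn0; case: trans => [[]|].
by case: trans => [[u' w]|] //=; rewrite IH addSnnS.
Qed.

Lemma okP_rcons B xs v : okP B (rcons xs v) <->
  okP B xs /\ (v -> forall i, i < size xs -> nth false xs i ->
                 ~~ overlap (nth block0 B i) (nth block0 B (size xs))).
Proof.
split.
- move=> H; split.
  + move=> i j Hi Hj Hij Hxi Hxj; apply: (H i j) => //; rewrite ?size_rcons ?nth_rcons ?Hi ?Hj //; lia.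
  + move=> Hv i Hi Hxi; apply: (H i (size xs)); rewrite ?size_rcons ?nth_rcons ?Hi ?ltnn ?eqxx //; lia.
- move=> [H1 H2] i j; rewrite size_rcons => Hi Hj Hij.
  have Hc : forall i, i < (size xs).+1 -> i < size xs \/ i = size xs by move=> i0; lia.
  case: (Hc i Hi) => [Hi'|Ei]; case: (Hc j Hj) => [Hj'|Ej].
  + rewrite !nth_rcons Hi' Hj'; exact: H1.
  + rewrite !nth_rcons Hi' Ej ltnn eqxx => Hx Hv; exact: H2.
  + rewrite !nth_rcons Hj' Ei ltnn eqxx => Hv Hx; rewrite overlap_sym; exact: H2.
  + by rewrite Ei Ej eqxx in Hij.
Qed.

Lemma run_spec B n xs : Bgood B n -> size xs <= size B ->
  (okP B xs -> run B n 0 (root_state n) xs = Some (stS B n xs)) /\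
  (forall u, run B n 0 (root_state n) xs = Some u -> okP B xs).
Proof.
move=> HBg; elim/last_ind: xs => [|xs v IH] Hs.
  by split; [rewrite /= stS_nil | move=> _ _ i j].
rewrite size_rcons in Hs; have Hl : size xs < size B := Hs.
have [IH1 IH2] := IH (ltnW Hs).
have Hb : nth block0 B (size xs) \in B := mem_nth block0 Hl.
have [Hb0 [Hb1 Hb2]] := HBg _ Hb.
have Hpos : forall i, i <= size xs -> 0 < blen (nth block0 B i).
  by move=> i Hi; have [] := HBg _ (mem_nth block0 (leq_ltn_trans Hi Hl)).
rewrite run_rcons add0n; split.
- move=> /okP_rcons [Hok Hv]; rewrite (IH1 Hok) /trans Hl.
  case: v Hv => Hv.
  + have F1 : fits (stS B n xs).1 (bk1 (nth block0 B (size xs))) (blen (nth block0 B (size xs))).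
      apply/fits_stS => // i Hi Hxi; have := Hv erefl i Hi Hxi.
      by rewrite /overlap negb_or => /andP[].
    have F2 : fits (stS B n xs).2 (bk2 (nth block0 B (size xs))) (blen (nth block0 B (size xs))).
      apply/fits_stS => // i Hi Hxi; have := Hv erefl i Hi Hxi.
      by rewrite /overlap negb_or => /andP[].
    by rewrite F1 F2 /= !clear_stS.
  + by rewrite /stS; congr (Some (_, _)); apply: eq_map => j; rewrite covk_rcons orbF.
- move=> u; case E: (run B n 0 (root_state n) xs) => [u0|] //.
  have Hok := IH2 _ E; rewrite (IH1 Hok) in E; case: E => <-.
  rewrite /trans Hl; case: v => /=.
  + case F: (_ && _) => //= _; apply/okP_rcons; split => // _ i Hi Hxi.
    move/andP: F => [F1 F2]; rewrite /overlap negb_or; apply/andP; split.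
    * by move/fits_stS: F1 => /(_ Hpos Hb1); apply.
    * by move/fits_stS: F2 => /(_ Hpos Hb2); apply.
  + by move=> _; apply/okP_rcons; split.
Qed.

Lemma path_run B n us x : rT_path B n us x -> forall l, l <= size B ->
  run B n 0 (root_state n) (take l x) = Some (nth (root_state n) us l).
Proof.
move=> [Hx Hus H0 Hm Hpath]; elim => [|l IH] Hl; first by rewrite take0 /= H0.
rewrite (take_nth false); last by rewrite Hx; lia.
rewrite run_rcons IH; last by lia.
rewrite add0n size_takel; last by rewrite Hx; lia.
by have [_ [w ->]] := Hpath l (ltnW Hl).
Qed.

Lemma path_feasible B n us x : Bgood B n -> rT_path B n us x -> feasible B x.
Proof.
move=> HBg Hp; have [Hx Hus H0 Hm Hpath] := Hp; split => //.
  have [_ [w]] := Hpath _ (leqnn _).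
  by rewrite /trans ltnn eqxx; case: (nth false x (size B)).
have E := path_run Hp (leqnn _).
have Hs : size (take (size B) x) <= size B by rewrite size_takel // Hx.
have [_ H2] := run_spec HBg Hs; have Hok := H2 _ E.
move=> i j Hi Hj Hij Hov; apply/negP => /andP[Hxi Hxj].
have Hsz : size (take (size B) x) = size B by rewrite size_takel // Hx.
have := Hok i j; rewrite Hsz !nth_take // => /(_ Hi Hj Hij Hxi Hxj).
by rewrite Hov.
Qed.

Lemma feasible_path B n x : Bgood B n -> feasible B x -> exists us, rT_path B n us x.
Proof.
move=> HBg [Hx Hm Hf].
pose us := [seq (if l <= size B then stS B n (take l x) else terminal_state n)
           | l <- iota 0 (size B).+2].
have Hnth : forall l, l < (size B).+2 -> nth (root_state n) us l =
    if l <= size B then stS B n (take l x) else terminal_state n.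
  by move=> l Hl; rewrite (nth_map 0) ?size_iota // nth_iota.
have Hok : forall l, l <= size B -> okP B (take l x).
  move=> l Hl i j; rewrite size_takel ?Hx; last by lia.
  move=> Hi Hj Hij; rewrite !nth_take // => Hxi Hxj; apply/negP => Hov.
  by have := Hf i j ltac:(lia) ltac:(lia) Hij Hov; rewrite Hxi Hxj.
have Hrun : forall l, l <= size B -> run B n 0 (root_state n) (take l x) = Some (stS B n (take l x)).
  move=> l Hl; have Hs : size (take l x) <= size B by rewrite size_takel ?Hx; lia.
  by have [H1 _] := run_spec HBg Hs; apply: H1; apply: Hok.
exists us; split => //.
- by rewrite size_map size_iota.
- by rewrite Hnth // take0 stS_nil.
- by rewrite Hnth // ltnn.
- move=> l Hl; rewrite Hnth; last by lia.
  rewrite Hl; split.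
    by exists (take l x); split; [rewrite size_takel ?Hx; lia | apply: Hrun].
  rewrite Hnth; last by lia.
  case: (ltnP l (size B)) => Hlm.
  + have E1 := Hrun _ Hlm.
    rewrite {1}(take_nth false) in E1; last by rewrite Hx; lia.
    rewrite run_rcons Hrun ?add0n ?size_takel in E1; try (rewrite ?Hx; lia).
    by move: E1; case: trans => [[u w]|] // [<-]; exists w.
  + have El : l = size B by lia.
    subst l; rewrite /trans ltnn eqxx Hm; by exists 0%R.
Qed.

Lemma path_weight_obj B n us x : rT_path B n us x -> path_weight B n us x = objective B n x.
Proof.
move=> [Hx Hus H0 Hm Hpath].
rewrite /path_weight /objective big_ord_recr /=.
have -> : arc_weight B n (size B) (nth (root_state n) us (size B)) (nth false x (size B)) = 0%R.
  by rewrite /arc_weight /trans ltnn eqxx; case: (nth false x (size B)).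
rewrite addr0; congr (_ + _)%R; rewrite [RHS]big_mkcond; apply: eq_bigr => -[i Hi] _ /=.
have [_ [w E]] := Hpath i (ltnW Hi).
rewrite /arc_weight E; move: E; rewrite /trans Hi.
case: (nth false x i) => //; last by case=> _ <-.
by case: ifP => // _ [_ <-].
Qed.


Definition hypsB (Sigma : finType) n (s1 s2 : seq Sigma) (B : seq block) :=
  [/\ size s1 = n, size s2 = n, perm_eq s1 s2, uniq B &
      forall b, (b \in B) = is_long_block n s1 s2 b].

Definition gpc (S : eqType) (s : seq S) (a : nat * nat) := take a.2 (drop a.1 s).

Lemma pieces_gpc (S : eqType) (s : seq S) c : pieces s c = map (gpc s) (intervals c).
Proof. exact: pieces_intervals. Qed.

Lemma size_gpc (S : eqType) (s : seq S) a : a.1 + a.2 <= size s -> size (gpc s a) = a.2.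
Proof. rewrite /gpc size_take size_drop => H; case: ltnP; lia. Qed.

Lemma Bgood_of (Sigma : finType) n (s1 s2 : seq Sigma) B : hypsB n s1 s2 B -> Bgood B n.
Proof.
move=> [_ _ _ _ HB] b; rewrite HB /is_long_block /is_block => /andP[/and5P[H1 H2 H3 H4 _] H5].
split; [lia | split; lia].
Qed.

Lemma block_take (Sigma : finType) n (s1 s2 : seq Sigma) B b : hypsB n s1 s2 B -> b \in B ->
  gpc s1 (bk1 b, blen b) = gpc s2 (bk2 b, blen b).
Proof.
move=> [_ _ _ _ HB]; rewrite HB => /andP[/and5P[_ _ _ _ /eqP E] _].
by rewrite /substr !addKn in E.
Qed.

Lemma mem_chosen B x b : b \in chosen B x <->
  exists i, [/\ i < size B, nth false x i & b = nth block0 B i].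
Proof.
rewrite /chosen; split.
  case/mapP => i; rewrite mem_filter mem_iota add0n => /andP[Hx /andP[_ Hi]] ->.
  by exists i.
case=> i [Hi Hx ->]; apply/mapP; exists i => //.
by rewrite mem_filter mem_iota Hx add0n Hi.
Qed.

Lemma chosen_uniq B x : uniq B -> uniq (chosen B x).
Proof.
move=> Hu; rewrite map_inj_in_uniq ?filter_uniq ?iota_uniq // => i j.
rewrite !mem_filter !mem_iota !add0n => /andP[_ /andP[_ Hi]] /andP[_ /andP[_ Hj]] E.
by apply/eqP; rewrite -(nth_uniq block0 Hi Hj Hu) E.
Qed.

Lemma chosen_sub B x b : b \in chosen B x -> b \in B.
Proof. by case/mem_chosen => i [Hi _ ->]; apply: mem_nth. Qed.

Lemma sum_chosen B x (F : block -> int) :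
  (\sum_(i < size B | nth false x i) F (nth block0 B i) = \sum_(b <- chosen B x) F b)%R.
Proof.
rewrite /chosen big_map big_filter.
have -> : iota 0 (size B) = index_iota 0 (size B) by rewrite /index_iota subn0.
by rewrite big_mkord.
Qed.

Lemma chosen_noov B x : uniq B -> feasible B x -> forall b b', b \in chosen B x ->
  b' \in chosen B x -> b != b' -> ~~ overlap b b'.
Proof.
move=> Hu [_ _ Hf] b b' /mem_chosen [i [Hi Hxi ->]] /mem_chosen [j [Hj Hxj ->]] Hne.
have Hij : i != j by apply: contraNneq Hne => ->.
by apply/negP => Hov; have := Hf i j Hi Hj Hij Hov; rewrite Hxi Hxj.
Qed.

Lemma ov_disj1 b b' : ~~ overlap b b' -> (bk1 b + blen b <= bk1 b') || (bk1 b' + blen b' <= bk1 b).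
Proof. by rewrite /overlap negb_or negb_and -!leqNgt => /andP[/orP[H|H] _]; rewrite H ?orbT. Qed.

Lemma ov_disj2 b b' : ~~ overlap b b' -> (bk2 b + blen b <= bk2 b') || (bk2 b' + blen b' <= bk2 b).
Proof. by rewrite /overlap negb_or !negb_and -!leqNgt => /andP[_ /orP[H|H]]; rewrite H ?orbT. Qed.

Lemma goodL_map (k : block -> nat) n C : uniq C ->
  (forall b, b \in C -> 0 < blen b /\ k b + blen b <= n) ->
  (forall b b', b \in C -> b' \in C -> b != b' -> (k b + blen b <= k b') || (k b' + blen b' <= k b)) ->
  goodL n [seq (k b, blen b) | b <- C].
Proof.
move=> Hu Hb Hd; split.
- by move=> a /mapP [b Hb' ->] /=; apply: Hb.
- move=> a a' /mapP[b Hb1 ->] /mapP[b' Hb2 ->] Hne /=; apply: Hd => //.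
  by case: (eqVneq b b') Hne => [->|//]; rewrite eqxx.
- rewrite map_inj_in_uniq // => b b' Hb1 Hb2 [E1 E2].
  case: (eqVneq b b') => // Hne; exfalso.
  have := Hd _ _ Hb1 Hb2 Hne; have := Hb _ Hb1; case=> H1 H2; case/orP; lia.
Qed.

Lemma sumn_ones (u : seq nat) : sumn (map snd [seq (j, 1) | j <- u]) = size u.
Proof. by elim: u => //= j u ->; rewrite add1n. Qed.

Lemma sum_one_minus (C : seq block) :
  (\sum_(b <- C) (1 - Posz (blen b)) = Posz (size C) - Posz (sumn [seq blen b | b <- C]))%R.
Proof. elim: C => [|b C IH]; rewrite ?big_nil ?big_cons //= IH; lia. Qed.

Lemma singles (T : Type) (P : seq (seq T)) : all (fun p => size p == 1) P ->
  P = map (fun a => [:: a]) (flatten P).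
Proof.
elim: P => //= p P IH /andP[/eqP Hp HP]; case: p Hp => [|a [|]] //= _.
by rewrite -IH.
Qed.

Lemma pieces_common (Sigma : finType) n (s1 s2 : seq Sigma) c1 c2 L1 L2 u1 u2 :
  size s1 = n -> size s2 = n -> perm_eq s1 s2 -> sumn c1 = n -> sumn c2 = n ->
  perm_eq (intervals c1) (L1 ++ [seq (j, 1) | j <- u1]) ->
  perm_eq (intervals c2) (L2 ++ [seq (j, 1) | j <- u2]) ->
  (forall j, j \in u1 -> j < n) -> (forall j, j \in u2 -> j < n) ->
  map (gpc s1) L1 = map (gpc s2) L2 ->
  perm_eq (pieces s1 c1) (pieces s2 c2).
Proof.
move=> Hs1 Hs2 Hrel S1 S2 I1 I2 Hu1 Hu2 EL.
have Pc1 : perm_eq (pieces s1 c1) (map (gpc s1) L1 ++ map (gpc s1) [seq (j, 1) | j <- u1]).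
  by rewrite -map_cat pieces_gpc; apply: perm_map.
have Pc2 : perm_eq (pieces s2 c2) (map (gpc s2) L2 ++ map (gpc s2) [seq (j, 1) | j <- u2]).
  by rewrite -map_cat pieces_gpc; apply: perm_map.
have F1 : perm_eq s1 (flatten (map (gpc s1) L1) ++ flatten (map (gpc s1) [seq (j, 1) | j <- u1])).
  by have := perm_flatten Pc1; rewrite flatten_pieces flatten_cat take_oversize // S1 Hs1.
have F2 : perm_eq s2 (flatten (map (gpc s2) L2) ++ flatten (map (gpc s2) [seq (j, 1) | j <- u2])).
  by have := perm_flatten Pc2; rewrite flatten_pieces flatten_cat take_oversize // S2 Hs2.
have FF : perm_eq (flatten (map (gpc s1) [seq (j, 1) | j <- u1]))
                  (flatten (map (gpc s2) [seq (j, 1) | j <- u2])).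
  rewrite -(perm_cat2l (flatten (map (gpc s1) L1))) {2}EL.
  by apply: (perm_trans _ (perm_trans Hrel F2)); rewrite perm_sym.
have E1 : map (gpc s1) [seq (j, 1) | j <- u1] =
          map (fun a => [:: a]) (flatten (map (gpc s1) [seq (j, 1) | j <- u1])).
  apply: singles; apply/allP => p /mapP [a /mapP [j Hj ->] ->].
  by rewrite size_gpc //= Hs1 addn1; apply: Hu1.
have E2 : map (gpc s2) [seq (j, 1) | j <- u2] =
          map (fun a => [:: a]) (flatten (map (gpc s2) [seq (j, 1) | j <- u2])).
  apply: singles; apply/allP => p /mapP [a /mapP [j Hj ->] ->].
  by rewrite size_gpc //= Hs2 addn1; apply: Hu2.
apply: (perm_trans Pc1); rewrite perm_sym; apply: (perm_trans Pc2).
rewrite -EL perm_cat2l E1 E2; apply: perm_map; by rewrite perm_sym.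
Qed.


Lemma part3 (Sigma : finType) n (s1 s2 : seq Sigma) B x : hypsB n s1 s2 B -> feasible B x ->
  objective B n x = Posz (size (chosen B x) + size (uncovered1 B n x))
  /\ exists c1 c2, [/\ common_partition s1 s2 c1 c2,
       size c1 = size (chosen B x) + size (uncovered1 B n x),
       perm_eq (intervals c1)
         ([seq (bk1 b, blen b) | b <- chosen B x] ++ [seq (j, 1) | j <- uncovered1 B n x]) &
       perm_eq (intervals c2)
         ([seq (bk2 b, blen b) | b <- chosen B x] ++ [seq (j, 1) | j <- uncovered2 B n x])].
Proof.
move=> HH Hf; have [Hs1 Hs2 Hrel Hu HB] := HH.
have HBg := Bgood_of HH.
have HCu : uniq (chosen B x) := chosen_uniq x Hu.
have Hnov := chosen_noov Hu Hf.
have HCb : forall b, b \in chosen B x -> 0 < blen b /\ bk1 b + blen b <= n /\ bk2 b + blen b <= n.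
  by move=> b /chosen_sub /HBg.
have G1 : goodL n [seq (bk1 b, blen b) | b <- chosen B x].
  apply: goodL_map => //; first by move=> b /HCb [? [? ?]].
  by move=> b b' Hb Hb' Hne; apply: ov_disj1; apply: Hnov.
have G2 : goodL n [seq (bk2 b, blen b) | b <- chosen B x].
  apply: goodL_map => //; first by move=> b /HCb [? [? ?]].
  by move=> b b' Hb Hb' Hne; apply: ov_disj2; apply: Hnov.
have U1 : uncL n [seq (bk1 b, blen b) | b <- chosen B x] = uncovered1 B n x.
  by rewrite /uncL /covL /uncovered1; apply: eq_filter => j; rewrite has_map.
have U2 : uncL n [seq (bk2 b, blen b) | b <- chosen B x] = uncovered2 B n x.
  by rewrite /uncL /covL /uncovered2; apply: eq_filter => j; rewrite has_map.
have [c1 [P1 S1 I1]] := tiling G1; have [c2 [P2 S2 I2]] := tiling G2.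
rewrite U1 in I1; rewrite U2 in I2.
have Hn : n = sumn [seq blen b | b <- chosen B x] + size (uncovered1 B n x).
  rewrite -{1}S1 -(intervals_from_snd 0 c1) (perm_sumn (perm_map snd I1)) map_cat sumn_cat sumn_ones.
  by rewrite -map_comp.
split.
  rewrite /objective (sum_chosen B x (fun b => (1 - Posz (blen b))%R)) sum_one_minus; lia.
exists c1, c2; split => //.
- apply/and3P; split; [by rewrite /is_partition P1 S1 Hs1 eqxx | by rewrite /is_partition P2 S2 Hs2 eqxx |].
  apply: (pieces_common Hs1 Hs2 Hrel S1 S2 I1 I2).
  + by move=> j; rewrite mem_filter mem_iota add0n => /andP[_ /andP[_ ]].
  + by move=> j; rewrite mem_filter mem_iota add0n => /andP[_ /andP[_ ]].
  + rewrite -(map_comp (gpc s1)) -(map_comp (gpc s2)); apply/eq_in_map => b Hb /=; exact: (block_take HH (chosen_sub Hb)).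
- by rewrite -(size_intervals_from 0 c1) (perm_size I1) size_cat !size_map.
Qed.

Lemma sum_split (T : Type) (M : seq T) (f : T -> nat) : all (fun q => 0 < f q) M ->
  (Posz (sumn [seq f q | q <- M]) + \sum_(q <- M | (1 < f q)%N) (1 - Posz (f q)) = Posz (size M))%R.
Proof.
elim: M => [|q M IH] /=; first by rewrite big_nil.
move=> /andP[Hq HM]; rewrite big_cons; have := IH HM; set S := (\sum_(j <- M | _) _)%R; case: ifP => H; [|move/negbT: H => H]; lia.
Qed.


Lemma disj_contra (a1 b1 e1 d1 a2 b2 e2 d2 : nat) :
  (a1 < a2 + b2) && (a2 < a1 + b1) || (e1 < e2 + b2) && (e2 < e1 + b1) ->
  (a1 + b1 <= a2) || (a2 + b2 <= a1) -> (e1 + d1 <= e2) || (e2 + d2 <= e1) ->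
  b1 = d1 -> b2 = d2 -> False.
Proof.
move=> /orP[/andP[H1 H2]|/andP[H1 H2]] /orP[H3|H3] /orP[H4|H4] E1 E2; lia.
Qed.

Lemma part6 (Sigma : finType) n (s1 s2 : seq Sigma) B c1 c2 : hypsB n s1 s2 B ->
  common_partition s1 s2 c1 c2 -> exists y, feasible B y /\ objective B n y = Posz (size c1).
Proof.
move=> HH; have [Hs1 Hs2 Hrel Hu HB] := HH.
move/and3P => [/andP[Pos1 /eqP Sum1] /andP[Pos2 /eqP Sum2] Hperm].
rewrite !pieces_gpc in Hperm.
have [M [HM1 HM2 HM3]] := matching Hperm.
have Hq1 : forall q, q \in M -> q.1 \in intervals c1.
  by move=> q Hq; rewrite -HM1; apply: map_f.
have Hq2 : forall q, q \in M -> q.2 \in intervals c2.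
  by move=> q Hq; rewrite -(perm_mem HM2); apply: map_f.
have Hp1 : forall q, q \in M -> 0 < q.1.2 /\ q.1.1 + q.1.2 <= n.
  move=> q /Hq1 /(intervals_from_props Pos1) [_ H1 H2]; split => //.
  by move: H2; rewrite add0n Sum1 Hs1.
have Hp2 : forall q, q \in M -> 0 < q.2.2 /\ q.2.1 + q.2.2 <= n.
  move=> q /Hq2 /(intervals_from_props Pos2) [_ H1 H2]; split => //.
  by move: H2; rewrite add0n Sum2 Hs2.
have Hlen : forall q, q \in M -> q.1.2 = q.2.2.
  move=> q Hq; have /eqP E := allP HM3 q Hq.
  have E' := congr1 size E.
  have [_ Ha] := Hp1 _ Hq; have [_ Hb] := Hp2 _ Hq.
  by rewrite !size_gpc ?Hs1 ?Hs2 in E'.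
have Hfst : {in M &, injective fst}.
  by apply: uniq_map_inj; rewrite HM1 intervals_from_uniq.
have Hsnd : {in M &, injective snd}.
  by apply: uniq_map_inj; rewrite (perm_uniq HM2) intervals_from_uniq.
pose blk := fun q : (nat * nat) * (nat * nat) => ((q.1.1, q.2.1, q.1.2) : block).
pose Bl := [seq blk q | q <- M & 1 < q.1.2].
have HBl : forall b, b \in Bl -> exists q, [/\ q \in M, 1 < q.1.2 & b = blk q].
  by move=> b /mapP [q]; rewrite mem_filter => /andP[H1 H2] ->; exists q.
have HBlB : forall b, b \in Bl -> b \in B.
  move=> b /HBl [q [Hq H1 ->]]; rewrite HB /is_long_block /is_block /=.
  have [Ha Hb] := Hp1 _ Hq; have [Hc Hd] := Hp2 _ Hq; have El := Hlen _ Hq.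
  rewrite /bk1 /bk2 /blen /= H1 andbT.
  have /eqP E := allP HM3 q Hq.
  move: Ha Hb Hc Hd El E; case: (q) => [[a0 b0] [c0 d0]] /= Ha Hb Hc Hd El E.
  apply/and5P; split; [lia|lia|lia|lia|].
  by rewrite /substr !addKn; apply/eqP; move: E; rewrite /gpc /= -El.
have Muniq : uniq M.
  have HU : uniq (map fst M) by rewrite HM1 (intervals_from_uniq _ Pos1).
  exact: map_uniq HU.
have Bl_uniq : uniq Bl.
  rewrite map_inj_in_uniq ?filter_uniq //.
  move=> q q'; rewrite !mem_filter => /andP[_ Hq] /andP[_ Hq'] E.
  have E1 : q.1 = q'.1.
    by move: E; rewrite /blk; case: q {Hq} => [[a b] c]; case: q' {Hq'} => [[a' b'] c'] /= [-> _ ->].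
  exact: Hfst Hq Hq' E1.
pose y := rcons [seq (nth block0 B i \in Bl) | i <- iota 0 (size B)] true.
have Hy : forall i, i < size B -> nth false y i = (nth block0 B i \in Bl).
  by move=> i Hi; rewrite nth_rcons size_map size_iota Hi (nth_map 0) ?size_iota // nth_iota.
have Hfy : feasible B y.
  split.
  + by rewrite size_rcons size_map size_iota.
  + by rewrite nth_rcons size_map size_iota ltnn eqxx.
  + move=> i j Hi Hj Hij Hov; rewrite !Hy //; apply/negP.
    move=> /andP[/HBl [q [Hq Hlq Eq]] /HBl [q' [Hq' Hlq' Eq']]].
    have Hbb : nth block0 B i != nth block0 B j by rewrite nth_uniq.
    have Hqq : q != q' by apply: contraNneq Hbb => E; rewrite Eq Eq' E.
    have Hne1 : q.1 != q'.1 by apply: contraNneq Hqq => E; apply/eqP; exact: Hfst Hq Hq' E.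
    have Hne2 : q.2 != q'.2 by apply: contraNneq Hqq => E; apply/eqP; exact: Hsnd Hq Hq' E.
    have D1 := intervals_from_disj Pos1 (Hq1 _ Hq) (Hq1 _ Hq') Hne1.
    have D2 := intervals_from_disj Pos2 (Hq2 _ Hq) (Hq2 _ Hq') Hne2.
    have L1 := Hlen _ Hq; have L2 := Hlen _ Hq'.
    move: Hov D1 D2 L1 L2; rewrite Eq Eq' /overlap /bk1 /bk2 /blen /=.
    case: (q) => [[a1 b1] [e1 d1]]; case: (q') => [[a2 b2] [e2 d2]] /=.
    exact: disj_contra.
exists y; split => //.
have Hperm_ch : perm_eq (chosen B y) Bl.
  apply: uniq_perm; [exact: chosen_uniq | exact: Bl_uniq |].
  move=> b; apply/idP/idP.
  + by case/mem_chosen => i [Hi Hyi ->]; rewrite -Hy.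
  + move=> Hb; apply/mem_chosen; have HbB := HBlB _ Hb.
    exists (index b B); rewrite index_mem HbB nth_index //; split => //.
    by rewrite Hy ?index_mem // nth_index.
rewrite /objective (sum_chosen B y (fun b => (1 - Posz (blen b))%R)) (perm_big _ Hperm_ch) /=.
rewrite big_map big_filter.
have Hn : n = sumn [seq q.1.2 | q <- M].
  rewrite -Hs1 -Sum1 -(intervals_from_snd 0 c1) -/(intervals c1) -HM1.
  by rewrite -map_comp.
have Hs : size c1 = size M by rewrite -(size_intervals_from 0 c1) -/(intervals c1) -HM1 size_map.
rewrite Hs {1}Hn; apply: (sum_split (f := fun q : (nat * nat) * (nat * nat) => q.1.2)).
by apply/allP => q /Hp1 [].
Qed.

Fixpoint allbs (k : nat) : seq (seq bool) :=
  match k with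
  | 0 => [:: [::]]
  | k'.+1 => [seq b :: t | b <- [:: true; false], t <- allbs k']
  end.

Lemma mem_allbs k (t : seq bool) : size t = k -> t \in allbs k.
Proof.
elim: k t => [|k IH] [|b t] //= [Hs].
have Ht := IH t Hs.
by rewrite !mem_cat; case: b; [apply/orP; left | apply/orP; right; apply/orP; left]; apply/mapP; exists t.
Qed.

Lemma exists_min (T : eqType) (s : seq T) (P : T -> Prop) (f : T -> int) :
  (exists x, x \in s /\ P x) ->
  exists x, [/\ x \in s, P x & forall y, y \in s -> P y -> (f x <= f y)%R].
Proof.
elim: s => [|a s IH] [x [Hx Px]]; first by [].
case: (classic (exists y, y \in s /\ P y)) => [Hex|Hno].
- have [z [Hz Pz Hmin]] := IH Hex.
  case: (classic (P a)) => Pa.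
  + case/orP: (le_total (f a) (f z)) => H.
    * exists a; split; rewrite ?mem_head // => y; rewrite inE => /predU1P[->//|Hy] Py.
      exact: le_trans H (Hmin _ Hy Py).
    * exists z; split; rewrite ?inE ?Hz ?orbT // => y; rewrite inE => /predU1P[->//|Hy] Py.
      exact: Hmin.
  + exists z; split; rewrite ?inE ?Hz ?orbT // => y; rewrite inE => /predU1P[->//|Hy] Py.
    exact: Hmin.
- have Exa : x = a.
    move: Hx; rewrite inE => /predU1P[//|Hx]; exfalso; apply: Hno; by exists x.
  subst x; exists a; split; rewrite ?mem_head // => y; rewrite inE => /predU1P[->//|Hy] Py.
  exfalso; apply: Hno; by exists y.
Qed.

Unset Implicit Arguments.
Theorem mainTheorem1 (Sigma : finType) (n : nat) (s1 s2 : seq Sigma) (B : seq block)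
  (Hs1 : size s1 = n) (Hs2 : size s2 = n) (Hrel : perm_eq s1 s2)
  (HBuniq : uniq B) (HB : forall b, (b \in B) = is_long_block n s1 s2 b) :
  (* the assignments encoded by r-T paths are exactly the feasible ones *)
  (forall x : seq bool, (exists us, rT_path B n us x) <-> feasible B x)
  (* path weight = objective value *)
  /\ (forall us x, rT_path B n us x -> path_weight B n us x = objective B n x)
  (* objective = size of the common partition made of the chosen blocks
     and single symbols at the uncovered positions *)
  /\ (forall x, feasible B x ->
        objective B n x = Posz (size (chosen B x) + size (uncovered1 B n x))
        /\ exists c1 c2, [/\ common_partition s1 s2 c1 c2,
             size c1 = size (chosen B x) + size (uncovered1 B n x),
             perm_eq (intervals c1)
               ([seq (bk1 b, blen b) | b <- chosen B x]
                ++ [seq (j, 1) | j <- uncovered1 B n x]) &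
             perm_eq (intervals c2)
               ([seq (bk2 b, blen b) | b <- chosen B x]
                ++ [seq (j, 1) | j <- uncovered2 B n x])])
  (* Opt(D) = Opt(MCSP) *)
  /\ (forall x, (exists us, min_path B n us x) <-> optimal B n x)
  (* minimum path weight = minimum size of a common partition *)
  /\ (exists us x, min_path B n us x)
  /\ (forall us x, min_path B n us x ->
        (exists c1 c2, common_partition s1 s2 c1 c2 /\
                       path_weight B n us x = Posz (size c1))
        /\ (forall c1 c2, common_partition s1 s2 c1 c2 ->
                       (path_weight B n us x <= Posz (size c1))%R)).
Proof.
have HH : hypsB n s1 s2 B by split.
have HBg := Bgood_of HH.
have P1 : forall x, (exists us, rT_path B n us x) <-> feasible B x.
  by move=> x; split; [case=> us; exact: path_feasible | exact: feasible_path].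
have P2 := @path_weight_obj B n.
have P4 : forall x, (exists us, min_path B n us x) <-> optimal B n x.
  move=> x; split.
  - case=> us [Hp Hmin]; split; first exact: path_feasible Hp.
    move=> y /P1 [us' Hp']; rewrite -(P2 _ _ Hp) -(P2 _ _ Hp'); exact: Hmin.
  - case=> Hf Hopt; have [us Hp] := feasible_path HBg Hf; exists us; split => // us' xs' Hp'.
    rewrite (P2 _ _ Hp) (P2 _ _ Hp'); apply: Hopt; exact: path_feasible Hp'.
have Hex : exists x, optimal B n x.
  have Hx0 : feasible B (rcons (nseq (size B) false) true).
    split.
    + by rewrite size_rcons size_nseq.
    + by rewrite nth_rcons size_nseq ltnn eqxx.
    + move=> i j Hi _ _ _; by rewrite nth_rcons size_nseq Hi nth_nseq Hi.
  have [x [_ Hfx Hmin]] := @exists_min _ _ _ (objective B n)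
     (ex_intro _ _ (conj (mem_allbs (size_rcons (nseq (size B) false) true)) Hx0)).
  exists x; split => // y Hy; apply: Hmin => //; apply: mem_allbs.
  by case: Hy => -> _ _; rewrite size_nseq.
split => //; split => //; split; first by move=> x Hf; exact: part3 HH Hf.
split => //; split.
  by have [x /P4 [us H]] := Hex; exists us, x.
move=> us x [Hp Hmin]; split.
- have Hf := path_feasible HBg Hp.
  have [Eo [c1 [c2 [Hc Hs _ _]]]] := part3 HH Hf.
  by exists c1, c2; split => //; rewrite (P2 _ _ Hp) Eo Hs.
- move=> c1 c2 Hc; have [y [Hy Ey]] := part6 HH Hc.
  have [us' Hp'] := feasible_path HBg Hy.
  rewrite -Ey -(P2 _ _ Hp'); exact: Hmin.
Qed.
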